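(* Fix $d\ge1$, the feasible set $\mathcal{X}=\mathbb{R}^d$, starting point $x_0=\mathbf{0}$, and $0<\mu\le L$, with quadratic switching cost. The competitive ratio of every online algorithm in the limited information setting is $\Omega\big(\frac{L}{\sqrt{\mu}}\big)$ as $\mu\to0$; that is, there are constants $c>0$ and $\mu_0>0$ such that for all $0<\mu\le\mu_0$, all $L\ge\mu$ and every such online algorithm $\mathcal{A}$, $\mathrm{cr}_{\mathcal{A}}\ge c\,L/\sqrt{\mu}$.
   Context: A problem instance consists of a horizon $T\ge1$ and differentiable functions $f_1,\dots,f_T:\mathbb{R}^d\to[0,\infty)$ with $\frac{\mu}{2}\|y-x\|^2\le f_t(y)-f_t(x)-\langle\nabla f_t(x),y-x\rangle\le\frac{L}{2}\|y-x\|^2$ for all $x,y$. An online algorithm in the limited information setting chooses, at each time $t$, an action $x_t$ using only $x_0$, the known parameters, and gradients of $f_{t-1}$ (and of earlier functions) evaluated at finitely many (adaptively chosen) points; in particular $x_t$ is chosen without any information about $f_t,\dots,f_T$. The algorithm's cost is $C_{\mathcal{A}}=\sum_{t=1}^T\big(f_t(x_t)+\frac12\|x_t-x_{t-1}\|^2\big)$, $C_{\mathsf{OPT}}$ is the minimum of the same expression over all $(x_1,\dots,x_T)$ with the same $x_0$, and $\mathrm{cr}_{\mathcal{A}}=\sup C_{\mathcal{A}}/C_{\mathsf{OPT}}$ over all problem instances (including all horizons $T$). *)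

(* Defs.v *)
From HB Require Import structures.
From mathcomp Require Import all_boot all_order all_algebra.
From mathcomp Require Import all_classical all_reals all_analysis.
Set Implicit Arguments. Unset Strict Implicit. Unset Printing Implicit Defensive.
Import Order.TTheory GRing.Theory Num.Theory numFieldNormedType.Exports.
Local Open Scope classical_set_scope.
Local Open Scope ring_scope.

Section SOCO.
Variables (R : realType) (d : nat).
Notation vec := 'rV[R]_d.

Definition dotv (u v : vec) : R := \sum_(i < d) u 0 i * v 0 i.
Definition sqnorm (u : vec) : R := dotv u u.

Definition grad (f : vec -> R) (x : vec) : vec :=
  \row_(i < d) derive f x (delta_mx 0 i).

Definition admissible (mu L : R) (T : nat) (f : nat -> vec -> R) : Prop :=
  forall t, (1 <= t <= T)%N ->
    (forall x, 0 <= f t x) /\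
    (forall x, differentiable (f t) x) /\
    (forall x y,
      mu / 2 * sqnorm (y - x) <= f t y - f t x - dotv (grad (f t) x) (y - x)
      <= L / 2 * sqnorm (y - x)).

(* A query program: finitely many adaptive gradient queries, then an output.
   QAsk s p k queries the gradient of f_s at the point p and continues with k. *)
Inductive qprog : Type :=
| QRet of vec
| QAsk of nat & vec & (vec -> qprog).

Fixpoint run (G : nat -> vec -> vec) (p : qprog) : vec :=
  match p with
  | QRet x => x
  | QAsk s q k => run G (k (G s q))
  end.

(* A deterministic online algorithm (with x_0 = 0 and the parameters d, mu, L
   fixed before it is chosen): at each time t >= 1 a query program. *)
Definition algorithm := nat -> qprog.

(* Oracle available at time t: gradients of f_s for 1 <= s <= t-1 only;
   queries about f_t, f_{t+1}, ... (or f_0) return no information. *)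
Definition oracle (f : nat -> vec -> R) (t : nat) : nat -> vec -> vec :=
  fun s q => if (0 < s < t)%N then grad (f s) q else 0.

Definition alg_action (A : algorithm) (f : nat -> vec -> R) (t : nat) : vec :=
  if t is 0 then 0 else run (oracle f t) (A t).

Definition cost (T : nat) (f : nat -> vec -> R) (xs : nat -> vec) : R :=
  \sum_(1 <= t < T.+1) (f t (xs t) + 2^-1 * sqnorm (xs t - xs t.-1)).

Definition opt_cost (T : nat) (f : nat -> vec -> R) : R :=
  inf [set cost T f xs | xs in [set xs : nat -> vec | xs 0%N = 0]].

(* the ratio C_A / C_OPT in \bar R, with c/0 = +oo for c > 0 and 0/0 = 0 *)
Definition ratio (CA CO : R) : \bar R :=
  if 0 < CO then (CA / CO)%:E else if 0 < CA then +oo%E else 0%E.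

Definition cr (mu L : R) (A : algorithm) : \bar R :=
  ereal_sup [set r | exists (T : nat) (f : nat -> vec -> R),
    (1 <= T)%N /\ admissible mu L T f /\
    r = ratio (cost T f (alg_action A f)) (opt_cost T f)].

End SOCO.

(* Main.v *)
Require Import Defs.
From HB Require Import structures.
From mathcomp Require Import all_boot all_order all_algebra.
From mathcomp Require Import all_classical all_reals all_analysis.
From mathcomp Require Import ring lra.
Set Implicit Arguments. Unset Strict Implicit.
Import Order.TTheory GRing.Theory Num.Theory numFieldNormedType.Exports.
Local Open Scope ring_scope.
Local Open Scope classical_set_scope.

Section S.
Variables (R : realType) (d : nat).
Notation vec := 'rV[R]_d.

Lemma coord_is_derive (y x v : vec) (i : 'I_d) :
  is_derive x v (fun N : vec => N 0 i - y 0 i) (v 0 i).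
Proof.
have cv : (fun h : R => h^-1 *: (((fun N : vec => N 0 i - y 0 i) \o shift x) (h *: v)
     - (x 0 i - y 0 i))) @ 0^' --> v 0 i.
  apply: cvg_near_cst; near=> h.
  rewrite /= !mxE.
  have h0 : h != 0 by near: h; exact: nbhs_dnbhs_neq.
  have -> : h * v 0 i + x 0 i - y 0 i - (x 0 i - y 0 i) = h * v 0 i by ring.
  by rewrite -[X in X = _]/(h^-1 * (h * v 0 i)) mulrA mulVf // mul1r.
apply: DeriveDef; first by apply/cvg_ex; exists (v 0 i).
exact: cvg_lim cv.
Unshelve. all: by end_near.
Qed.
Definition q (a : R) (y : vec) : vec -> R := fun x => a * sqnorm (x - y).

Lemma q_is_derive a y x v : is_derive x v (q a y) (2 * a * dotv (x - y) v).
Proof.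
set c := fun (i : 'I_d) (N : vec) => N 0 i - y 0 i.
have -> : q a y = (cst a * \sum_(i < d) (c i * c i)).
  apply/funext => z; rewrite /q /sqnorm /dotv /= fct_sumE; congr (_ * _).
  by apply: eq_bigr => i _; rewrite /c !mxE.
have H : forall i, is_derive x v (c i * c i) (c i x *: v 0 i + c i x *: v 0 i).
  move=> i; apply: is_deriveM; exact: coord_is_derive.
apply: is_derive_eq.
have sc : forall u w : R, u *: w = u * w by [].
rewrite scaler0 addr0 /cst /dotv scaler_sumr mulr_sumr; apply: eq_bigr => i _.
by rewrite /c !sc !mxE; ring.
Qed.
Lemma sc (u w : R) : u *: w = u * w. Proof. by []. Qed.

Lemma sqnorm_ge0 (u : vec) : 0 <= sqnorm u.
Proof. by apply: sumr_ge0 => i _; rewrite -expr2 sqr_ge0. Qed.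

Lemma sqnormZ (r : R) (u : vec) : sqnorm (r *: u) = r ^+ 2 * sqnorm u.
Proof.
rewrite /sqnorm /dotv mulr_sumr; apply: eq_bigr => i _; rewrite !mxE; ring.
Qed.

Lemma dotv_delta (u : vec) (i : 'I_d) : dotv u (delta_mx 0 i) = u 0 i.
Proof.
rewrite /dotv (bigD1 i) //= big1 => [|j /negbTE ji]; first by rewrite !mxE !eqxx mulr1 addr0.
by rewrite !mxE ji andbF mulr0.
Qed.

Lemma sqnorm_delta (i : 'I_d) : sqnorm (delta_mx 0 i : vec) = 1.
Proof. by rewrite /sqnorm dotv_delta mxE !eqxx. Qed.

Lemma sqnorm_gt0 (u : vec) : u != 0 -> 0 < sqnorm u.
Proof.
move=> u0.
have [j uj] : exists j, u 0 j != 0.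
  apply/existsP; apply: contraNT u0 => /existsPn H; apply/eqP/rowP => j.
  by rewrite mxE; apply/eqP; move: (H j); rewrite negbK.
rewrite /sqnorm /dotv (bigD1 j) //=.
apply: (@lt_le_trans _ _ (u 0 j * u 0 j)); first by rewrite -expr2 exprn_even_gt0.
rewrite lerDl; apply: sumr_ge0 => i _; by rewrite -expr2 sqr_ge0.
Qed.

Lemma grad_q a y x : grad (q a y) x = (2 * a) *: (x - y).
Proof.
apply/rowP => i; rewrite !mxE.
have [_ ->] := q_is_derive a y x (delta_mx 0 i).
by rewrite dotv_delta !mxE.
Qed.

Lemma q_diff a y x : differentiable (q a y) x.
Proof.
set c := fun (i : 'I_d) (N : vec) => N 0 i - y 0 i.
have -> : q a y = (cst a * \sum_(i < d) (c i * c i)).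
  apply/funext => z; rewrite /q /sqnorm /dotv /= fct_sumE; congr (_ * _).
  by apply: eq_bigr => i _; rewrite /c !mxE.
apply: differentiableM; first exact: differentiable_cst.
apply: differentiable_sum => i.
have ci : differentiable (c i) x.
  have -> : c i = (fun N : vec => N 0 i) - cst (y 0 i) by apply/funext.
  by apply: differentiableB; [exact: differentiable_coord|exact: differentiable_cst].
exact: differentiableM.
Qed.

Lemma q_ineq a y x z :
  q a y z - q a y x - dotv (grad (q a y) x) (z - x) = a * sqnorm (z - x).
Proof.
rewrite grad_q /q /sqnorm /dotv !mulr_sumr -!sumrB; apply: eq_bigr => i _.
rewrite !mxE; ring.
Qed.

Lemma adm_q mu L T (f : nat -> vec -> R) :
  (forall t, (1 <= t <= T)%N -> exists a y, mu / 2 <= a <= L / 2 /\ 0 <= a /\ f t = q a y) ->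
  admissible mu L T f.
Proof.
move=> H t /H [a [y [/andP [h1 h2] [a0 ->]]]]; split; last split.
- by move=> x; rewrite /q mulr_ge0 // sqnorm_ge0.
- exact: q_diff.
- move=> x z; rewrite q_ineq; apply/andP; split; apply: ler_wpM2r => //; exact: sqnorm_ge0.
Qed.

Lemma alg_eq (A : algorithm R d) (f g : nat -> vec -> R) t :
  (forall s, (0 < s < t)%N -> f s = g s) -> alg_action A f t = alg_action A g t.
Proof.
move=> H; case: t H => [//|t] H; rewrite /alg_action.
have -> : oracle f t.+1 = oracle g t.+1; last by [].
apply/funext => s; apply/funext => p; rewrite /oracle.
by case: ifP => // /H ->.
Qed.

Lemma cost_ge0 T (f : nat -> vec -> R) (xs : nat -> vec) : (forall t x, 0 <= f t x) -> 0 <= cost T f xs.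
Proof.
move=> H; apply: sumr_ge0 => i _; apply: addr_ge0 => //.
by apply: mulr_ge0; [rewrite invr_ge0|exact: sqnorm_ge0].
Qed.

Lemma opt_le T (f : nat -> vec -> R) (xs : nat -> vec) : (forall t x, 0 <= f t x) -> xs 0%N = 0 -> opt_cost T f <= cost T f xs.
Proof.
move=> H x0; rewrite /opt_cost; apply: ge_inf; last by exists xs.
by exists 0 => _ [ys _ <-]; exact: cost_ge0.
Qed.

Lemma ratio_oo (CA CO : R) : 0 < CA -> CO <= 0 -> Defs.ratio CA CO = (+oo)%E.
Proof. by move=> ca co; rewrite /Defs.ratio ltNge co /= ca. Qed.

Lemma ratio_ge (CA CO B : R) : 0 < CA -> CO <= B -> 0 < B -> ((CA / B)%:E <= Defs.ratio CA CO)%E.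
Proof.
move=> ca cb b0; rewrite /Defs.ratio; case: ifP => co.
  rewrite lee_fin ler_pM2l // lef_pV2 //; rewrite posrE //.
by rewrite ca leey.
Qed.

Lemma cr_ge mu L (A : algorithm R d) T (f : nat -> vec -> R) r :
  (1 <= T)%N -> admissible mu L T f ->
  (r%:E <= Defs.ratio (cost T f (alg_action A f)) (opt_cost T f))%E ->
  (r%:E <= cr mu L A)%E.
Proof.
move=> T1 adm H; apply: (le_trans H); apply: ereal_sup_ubound.
by exists T, f.
Qed.
End S.

Theorem lemma10 (R : realType) (d : nat) : (1 <= d)%N ->
  exists c : R, 0 < c /\ exists mu0 : R, 0 < mu0 /\
    forall mu L : R, 0 < mu -> mu <= mu0 -> mu <= L ->
      forall A : algorithm R d,
        ((c * L / Num.sqrt mu)%:E <= cr mu L A)%E.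
Proof.
move=> hd; exists (3^-1); split; first by rewrite invr_gt0.
exists 1; split => // mu L mu0 mu1 muL A.
have L0 : 0 < L by apply: lt_le_trans muL.
set g : nat -> 'rV[R]_d -> R := fun _ => q (mu / 2) (0 : 'rV[R]_d).
have gnn : forall t x, 0 <= g t x.
  by move=> t x; rewrite /g /q mulr_ge0 ?sqnorm_ge0 // divr_ge0 // ltW.
have sq0 : sqnorm (0:'rV[R]_d) = 0 by rewrite /sqnorm /dotv big1 // => i _; rewrite mxE mul0r.
have [[t [t1 at0]] | Hn] := pselect (exists t, (1 <= t)%N /\ alg_action A g t != 0).
  apply: (@cr_ge _ _ _ _ _ t g) => //.
    apply: adm_q => s _; exists (mu / 2), 0; split => //.
    rewrite lexx /= ler_pM2r // ?invr_gt0 //; split => //.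
    by rewrite divr_ge0 // ltW.
  rewrite ratio_oo ?leey //.
    rewrite /cost; case: t t1 at0 => // t _ at0.
    rewrite big_nat_recr //=; apply: ltr_wpDl; first by apply: sumr_ge0 => i _; apply: addr_ge0 => //; apply: mulr_ge0; [rewrite invr_ge0|exact: sqnorm_ge0].
    apply: ltr_pwDl; last by apply: mulr_ge0; [rewrite invr_ge0|exact: sqnorm_ge0].
    by rewrite /g /q subr0 mulr_gt0 ?divr_gt0 // sqnorm_gt0.
  apply: (le_trans (@opt_le _ _ t g (fun _ => 0) gnn erefl)).
  by rewrite /cost big1 // => i _; rewrite /g /q !subrr sq0 !mulr0 addr0.
have Hz : forall t, alg_action A g t = 0.
  move=> [|t] //; case: (eqVneq (alg_action A g t.+1) 0) => // H; exfalso; apply: Hn; by exists t.+1.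
set s := Num.sqrt mu.
have s0 : 0 < s by rewrite sqrtr_gt0.
have ss : s ^+ 2 = mu by rewrite sqr_sqrtr // ltW.
have s1 : s <= 1 by nra.
set k := (Num.truncn s^-1).+1.
have [kl ku] : s^-1 < k%:R /\ k%:R <= s^-1 + 1.
  have sI : 0 <= s^-1 by rewrite invr_ge0 ltW.
  have := truncn_itv sI; rewrite /k mulrSr => /andP [h1 h2].
  by split => //; rewrite lerD2r.
have k0 : (0 < k)%N by [].
have K0 : 0 < k%:R :> R by rewrite ltr0n.
set e : 'rV[R]_d := delta_mx 0 (Ordinal hd).
set f : nat -> 'rV[R]_d -> R := fun t => if t == k then q (L / 2) e else g t.
have fnn : forall t x, 0 <= f t x.
  move=> t x; rewrite /f; case: ifP => _ //.
  by rewrite /q mulr_ge0 ?sqnorm_ge0 // divr_ge0 // ltW.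
have Hf : forall t, (t <= k)%N -> alg_action A f t = 0.
  move=> t tk; rewrite (@alg_eq _ _ _ _ g) ?Hz // => u /andP [_ ut].
  by rewrite /f (ltn_eqF (leq_trans ut tk)).
have CA : cost k f (alg_action A f) = L / 2.
  rewrite /cost big_nat_recr // big_nat_cond big1 ?add0r.
    rewrite !Hf ?leq_pred // /f eqxx /q sub0r -scaleN1r sqnormZ sqnorm_delta subrr sq0.
    by rewrite sqrrN expr1n mul1r mulr1 mulr0 addr0 [LHS]add0r.
  move=> i /andP [/andP [i1 ik] _].
  rewrite !Hf ?(ltnW ik) ?(leq_trans (leq_pred i) (ltnW ik)) //.
  by rewrite /f (ltn_eqF ik) /g /q !subrr sq0 !mulr0 addr0.
set xs : nat -> 'rV[R]_d := fun t => (t%:R / k%:R) *: e.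
have xs0 : xs 0%N = 0 by rewrite /xs mul0r scale0r.
have CO : opt_cost k f <= (mu / 2 + 2^-1 * (k%:R^-1) ^+ 2) * k%:R.
  apply: le_trans (@opt_le _ _ k f xs fnn xs0) _.
  apply: (@le_trans _ _ (\sum_(1 <= t < k.+1) (mu / 2 + 2^-1 * (k%:R^-1) ^+ 2))); last first.
    by rewrite sumr_const_nat subn1 mulr_natr.
  apply: ler_sum_nat => t /andP [t1 tk]; apply: lerD.
    rewrite /f; case: eqP => [->|tnk].
      rewrite /xs /q divff ?scale1r ?subrr ?sq0 ?mulr0 ?divr_ge0 ?(ltW mu0) //.
      by rewrite gt_eqF.
    rewrite /g /q subr0 sqnormZ sqnorm_delta mulr1 ler_piMr ?divr_ge0 ?(ltW mu0) //.
    apply: exprn_ile1; first by rewrite divr_ge0.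
    by rewrite ler_pdivrMr // mul1r ler_nat.
  case: t t1 tk => // t _ _ /=.
  have -> : xs t.+1 - xs t = k%:R^-1 *: e.
    rewrite /xs -scalerBl; congr (_ *: _); rewrite mulrSr; field; by rewrite gt_eqF.
  by rewrite sqnormZ sqnorm_delta mulr1.
set K : R := k%:R.
have sK : 1 < s * K.
  have := mulVf (negbT (gt_eqF s0)); rewrite mulrC => h; nra.
have sK2 : s * K <= 1 + s.
  have := mulVf (negbT (gt_eqF s0)); rewrite mulrC => h; nra.
have KI : K * K^-1 = 1 by rewrite mulfV // gt_eqF.
have iK0 : 0 < K^-1 by rewrite invr_gt0.
have iKs : K^-1 <= s by nra.
have B : opt_cost k f <= 3 / 2 * s.
  apply: (le_trans CO).
  have -> : (mu / 2 + 2^-1 * K^-1 ^+ 2) * K = mu * K / 2 + K^-1 / 2.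
    rewrite !mulrDl; congr (_ + _); first by rewrite mulrAC.
    by rewrite expr2 -!mulrA [K^-1 * K]mulrC KI mulr1 mulrC.
  rewrite -ss; nra.
apply: (@cr_ge _ _ _ _ _ k f) => //.
  apply: adm_q => t _; rewrite /f; case: ifP => _.
    exists (L / 2), e; split; first by rewrite lexx andbT ler_pM2r // ?invr_gt0.
    by split => //; rewrite divr_ge0 // ltW.
  exists (mu / 2), 0; split => //.
  rewrite lexx /= ler_pM2r // ?invr_gt0 //; split => //.
  by rewrite divr_ge0 // ltW.
rewrite CA; have -> : 3^-1 * L / s = (L / 2) / (3 / 2 * s) by field; rewrite gt_eqF.
apply: ratio_ge => //; first by rewrite divr_gt0.
by rewrite mulr_gt0 // divr_gt0.
Qed.
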